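(* Let $(S,\mathcal{S})$ be a measurable space with $\Delta\in\mathcal{S}\otimes\mathcal{S}$. Then every constructive map $\tau:\Omega\to C(S)$ is the union of countably many pairwise disjoint finite cr-sets (i.e. there are finite cr-sets $\rho_n$ with $\rho_n(\omega)\cap\rho_m(\omega)=\emptyset$ for $n\neq m$ and $\tau(\omega)=\bigcup_n\rho_n(\omega)$ for all $\omega$). In particular, $\tau$ is $\mathcal{F}$-$\mathcal{C}(\mathcal{S})$ measurable, i.e. a cr-set.
   Context: $\Delta=\{(x,x)\mid x\in S\}$. $(\Omega,\mathcal{F},P)$ is a probability space; $C(S)$ is the set of countable subsets of $S$; $N_A(M)=|A\cap M|$; $\mathcal{C}(\mathcal{S})=\sigma(N_A\mid A\in\mathcal{S})$; a cr-set is an $\mathcal{F}$-$\mathcal{C}(\mathcal{S})$ measurable map $\Omega\to C(S)$, finite if its values are finite sets. A map $\tau:\Omega\to C(S)$ is constructive if $\tau(\omega)=\bigcup_k\pi_k(\omega)$ for all $\omega$ for some finite cr-sets $\pi_k$, $k\in\mathbb{N}$. *)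

(* Defs.v *)
From Stdlib Require Import List.

Definition sigma_algebra {T : Type} (F : (T -> Prop) -> Prop) : Prop :=
  F (fun _ => True) /\
  (forall A, F A -> F (fun x => ~ A x)) /\
  (forall A : nat -> T -> Prop, (forall n, F (A n)) -> F (fun x => exists n, A n x)).

Definition generated {T : Type} (G : (T -> Prop) -> Prop) (A : T -> Prop) : Prop :=
  forall F, sigma_algebra F -> (forall B, G B -> F B) -> F A.

Definition product_sigma {T U : Type} (S1 : (T -> Prop) -> Prop) (S2 : (U -> Prop) -> Prop)
  : (T * U -> Prop) -> Prop :=
  generated (fun R => exists A B, S1 A /\ S2 B /\
                        forall p, R p <-> (A (fst p) /\ B (snd p))).

Definition diagonal (S : Type) : S * S -> Prop := fun p => fst p = snd p.

Definition countable {T : Type} (M : T -> Prop) : Prop :=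
  exists f : T -> nat, forall x y, M x -> M y -> f x = f y -> x = y.

Definition finite_set {T : Type} (M : T -> Prop) : Prop :=
  exists l : list T, forall x, M x -> In x l.

Definition CS (S : Type) : Type := { M : S -> Prop | countable M }.

(* |P| = k, with k : option nat, None standing for infinity (countable infinity). *)
Definition card_is {T : Type} (P : T -> Prop) (k : option nat) : Prop :=
  match k with
  | Some n => exists l : list T, NoDup l /\ length l = n /\ forall x, P x <-> In x l
  | None => ~ finite_set P
  end.

(* N_A(M) = |A cap M| *)
(* C(S-cal) = sigma(N_A | A in S-cal): generated by the preimages
   N_A^{-1}({k}), k in N u {infinity} (the discrete sigma-algebra on N u {oo}). *)
Definition crsigma {S : Type} (SS : (S -> Prop) -> Prop) : (CS S -> Prop) -> Prop :=
  generated (fun E => exists (A : S -> Prop) (k : option nat), SS A /\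
               forall M : CS S, E M <-> card_is (fun x => A x /\ proj1_sig M x) k).

Definition crset {Omega S : Type} (FF : (Omega -> Prop) -> Prop) (SS : (S -> Prop) -> Prop)
  (tau : Omega -> CS S) : Prop :=
  forall E, crsigma SS E -> FF (fun w => E (tau w)).

Definition finite_crset {Omega S : Type} (FF : (Omega -> Prop) -> Prop) (SS : (S -> Prop) -> Prop)
  (tau : Omega -> CS S) : Prop :=
  crset FF SS tau /\ forall w, finite_set (proj1_sig (tau w)).

Definition constructive {Omega S : Type} (FF : (Omega -> Prop) -> Prop) (SS : (S -> Prop) -> Prop)
  (tau : Omega -> CS S) : Prop :=
  exists pi : nat -> Omega -> CS S,
    (forall k, finite_crset FF SS (pi k)) /\
    forall w x, proj1_sig (tau w) x <-> exists k, proj1_sig (pi k w) x.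

(* Main.v *)
Require Import Defs.
From Stdlib Require Import List Arith Lia Classical FunctionalExtensionality PropExtensionality ClassicalEpsilon Cantor.
Import ListNotations.

Lemma ms_ext {T} (F : (T -> Prop) -> Prop) (P Q : T -> Prop) :
  F P -> (forall w, P w <-> Q w) -> F Q.
Proof.
  intros H E. replace Q with P; auto.
  apply functional_extensionality; intro w; apply propositional_extensionality; auto.
Qed.

Lemma ms_true {T} F (hF : @sigma_algebra T F) : F (fun _ => True).
Proof. apply hF. Qed.

Lemma ms_compl {T} F (hF : @sigma_algebra T F) P : F P -> F (fun w => ~ P w).
Proof. apply hF. Qed.

Lemma ms_exnat {T} F (hF : @sigma_algebra T F) (E : nat -> T -> Prop) :
  (forall n, F (E n)) -> F (fun w => exists n, E n w).
Proof. apply hF. Qed.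

Lemma ms_false {T} F (hF : @sigma_algebra T F) : F (fun _ => False).
Proof.
  apply (ms_ext F (fun w => ~ True)). apply ms_compl; auto. apply ms_true; auto. tauto.
Qed.

Lemma ms_const {T} F (hF : @sigma_algebra T F) (P : Prop) : F (fun _ => P).
Proof.
  destruct (classic P).
  - apply (ms_ext F (fun _ => True)). apply ms_true; auto. tauto.
  - apply (ms_ext F (fun _ => False)). apply ms_false; auto. tauto.
Qed.

Lemma ms_or {T} F (hF : @sigma_algebra T F) P Q : F P -> F Q -> F (fun w => P w \/ Q w).
Proof.
  intros HP HQ.
  apply (ms_ext F (fun w => exists n, (fun n => match n with 0 => P | _ => Q end) n w)).
  apply ms_exnat; auto. intros [|n]; auto.
  intro w; split. intros [[|n] H]; auto. intros [H|H]. exists 0; auto. exists 1; auto.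
Qed.

Lemma ms_and {T} F (hF : @sigma_algebra T F) P Q : F P -> F Q -> F (fun w => P w /\ Q w).
Proof.
  intros HP HQ.
  apply (ms_ext F (fun w => ~ (~ P w \/ ~ Q w))).
  apply ms_compl; auto. apply ms_or; auto; apply ms_compl; auto.
  intro w; tauto.
Qed.

Lemma ms_allnat {T} F (hF : @sigma_algebra T F) (E : nat -> T -> Prop) :
  (forall n, F (E n)) -> F (fun w => forall n, E n w).
Proof.
  intros H. apply (ms_ext F (fun w => ~ exists n, ~ E n w)).
  apply ms_compl; auto. apply ms_exnat; auto. intro n; apply ms_compl; auto.
  intro w; split. intros H1 n. apply NNPP; intro H2; apply H1; eauto.
  intros H1 [n H2]; auto.
Qed.

Lemma ms_alllist {T X} F (hF : @sigma_algebra T F) (E : X -> T -> Prop) (l : list X) :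
  (forall x, F (E x)) -> F (fun w => forall x, In x l -> E x w).
Proof.
  intros H. induction l as [|a l IH].
  - apply (ms_ext F (fun _ => True)). apply ms_true; auto. simpl; tauto.
  - apply (ms_ext F (fun w => E a w /\ forall x, In x l -> E x w)).
    apply ms_and; auto. intro w; simpl; split.
    + intros [H1 H2] x [<-|Hx]; auto.
    + intros H1; split; auto.
Qed.

Definition Cnt {T} (F : (T -> Prop) -> Prop) (X : Type) :=
  forall E : X -> T -> Prop, (forall x, F (E x)) -> F (fun w => exists x, E x w).

Lemma Cnt_nat {T} F (hF : @sigma_algebra T F) : Cnt F nat.
Proof. intros E H; apply ms_exnat; auto. Qed.

Lemma Cnt_bool {T} F (hF : @sigma_algebra T F) : Cnt F bool.
Proof.
  intros E H. apply (ms_ext F (fun w => E true w \/ E false w)). apply ms_or; auto.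
  intro w; split. intros [H1|H1]; eauto. intros [[|] H1]; auto.
Qed.

Lemma Cnt_prod {T} F X Y : @Cnt T F X -> Cnt F Y -> Cnt F (X * Y).
Proof.
  intros HX HY E H. apply (ms_ext F (fun w => exists x, exists y, E (x,y) w)).
  apply HX; intro x; apply HY; intro y; auto.
  intro w; split. intros [x [y H1]]; eauto. intros [[x y] H1]; eauto.
Qed.

Lemma Cnt_listlen {T} F (hF : @sigma_algebra T F) X : Cnt F X ->
  forall n (E : list X -> T -> Prop), (forall l, F (E l)) ->
  F (fun w => exists l, length l = n /\ E l w).
Proof.
  intros HX n. induction n as [|n IH]; intros E H.
  - apply (ms_ext F (E nil)). auto. intro w; split. intros; exists nil; auto.
    intros [[|a l] [H1 H2]]; simpl in H1; try discriminate; auto.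
  - apply (ms_ext F (fun w => exists x, exists l, length l = n /\ E (x :: l) w)).
    apply HX; intro x; apply IH; auto.
    intro w; split. intros [x [l [H1 H2]]]; exists (x :: l); simpl; auto.
    intros [[|a l] [H1 H2]]; simpl in H1; try discriminate. exists a, l; split; auto.
Qed.

Lemma Cnt_list {T} F (hF : @sigma_algebra T F) X : Cnt F X -> Cnt F (list X).
Proof.
  intros HX E H. apply (ms_ext F (fun w => exists n, exists l, length l = n /\ E l w)).
  apply ms_exnat; auto. intro n; apply Cnt_listlen; auto.
  intro w; split. intros [n [l [_ H1]]]; eauto. intros [l H1]; exists (length l), l; auto.
Qed.

Definition Ge {X} (P : X -> Prop) (m : nat) :=
  exists xs, NoDup xs /\ length xs = m /\ forall x, In x xs -> P x.

Lemma Ge_down {X} (P : X -> Prop) n : Ge P (S n) -> Ge P n.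
Proof.
  intros [[|a xs] [H1 [H2 H3]]]; simpl in H2; try discriminate.
  exists xs; repeat split. inversion H1; auto. lia. intros; apply H3; simpl; auto.
Qed.

Lemma Ge_le {X} (P : X -> Prop) n k : Ge P n -> k <= n -> Ge P k.
Proof.
  intros H Hk. induction Hk; auto. apply IHHk. apply Ge_down; auto.
Qed.

Lemma infinite_Ge {X} (P : X -> Prop) : ~ finite_set P -> forall n, Ge P n.
Proof.
  intros Hi n. induction n as [|n [xs [H1 [H2 H3]]]].
  - exists nil; simpl; repeat split; auto. constructor. tauto.
  - destruct (classic (exists x, P x /\ ~ In x xs)) as [[x [Hx Hn]]|Hc].
    + exists (x :: xs); repeat split; simpl; auto. constructor; auto. intros y [<-|Hy]; auto.
    + exfalso; apply Hi. exists xs. intros x Hx. apply NNPP; intro; apply Hc; eauto.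
Qed.

Lemma finite_exact {X} (P : X -> Prop) : forall L, exists l, NoDup l /\
  forall x, (P x /\ In x L) <-> In x l.
Proof.
  induction L as [|a L [l [H1 H2]]].
  - exists nil; split. constructor. simpl; tauto.
  - destruct (classic (P a /\ ~ In a l)) as [[Ha Hn]|Hc].
    + exists (a :: l); split. constructor; auto. intros x; simpl; rewrite <- H2.
      split. intros [Hx [->|Hx']]; auto. intros [<-|[Hx Hx']]; auto.
    + exists l; split; auto. intros x; simpl. split.
      * intros [Hx [Ea|Hx']].
        -- subst a. apply NNPP; intro; apply Hc; split; auto.
        -- apply H2; auto.
      * intros Hx. apply H2 in Hx. tauto.
Qed.

Lemma card_Some {X} (P : X -> Prop) m : card_is P (Some m) <-> Ge P m /\ ~ Ge P (S m).
Proof.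
  simpl. split.
  - intros [l [H1 [H2 H3]]]. split.
    + exists l; repeat split; auto. intros; apply H3; auto.
    + intros [xs [G1 [G2 G3]]]. assert (length xs <= length l).
      { apply NoDup_incl_length; auto. intros x Hx; apply H3; auto. } lia.
  - intros [HG HN]. destruct (classic (finite_set P)) as [[L HL]|Hi].
    + destruct (finite_exact P L) as [l [H1 H2]].
      assert (E : forall x, P x <-> In x l).
      { intro x; rewrite <- H2; split; auto; tauto. }
      destruct HG as [xs [G1 [G2 G3]]].
      assert (length xs <= length l).
      { apply NoDup_incl_length; auto. intros x Hx; apply E; auto. }
      assert (length l <= m).
      { destruct (le_lt_dec (length l) m); auto. exfalso; apply HN.
        apply (Ge_le P (length l)); [|lia]. exists l; repeat split; auto. intros; apply E; auto. }
      exists l; repeat split; auto. lia. all: apply E.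
    + exfalso; apply HN; apply infinite_Ge; auto.
Qed.

Lemma card_None {X} (P : X -> Prop) : card_is P None <-> forall n, Ge P n.
Proof.
  simpl. split. apply infinite_Ge.
  intros H [L HL]. destruct (H (S (length L))) as [xs [G1 [G2 G3]]].
  assert (length xs <= length L). { apply NoDup_incl_length; auto. intros x Hx; auto. } lia.
Qed.

Lemma crset_of_Ge {Omega St} (FF : (Omega -> Prop) -> Prop) (SS : (St -> Prop) -> Prop)
  (hF : sigma_algebra FF) (tau : Omega -> CS St) :
  (forall A m, SS A -> FF (fun w => Ge (fun x => A x /\ proj1_sig (tau w) x) m)) ->
  crset FF SS tau.
Proof.
  intros HG E HE. apply HE.
  - split; [|split].
    + apply hF.
    + intros A HA. apply (ms_compl FF hF _ HA).
    + intros A HA. apply (ms_exnat FF hF (fun n w => A n (tau w)) HA).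
  - intros B [A [k [HA HB]]].
    apply (ms_ext FF (fun w => card_is (fun x => A x /\ proj1_sig (tau w) x) k)).
    2:{ intro w; rewrite HB; tauto. }
    destruct k as [m|].
    + apply (ms_ext FF (fun w => Ge (fun x => A x /\ proj1_sig (tau w) x) m /\
                                 ~ Ge (fun x => A x /\ proj1_sig (tau w) x) (S m))).
      apply ms_and; auto. apply ms_compl; auto. intro w; rewrite card_Some; tauto.
    + apply (ms_ext FF (fun w => forall n, Ge (fun x => A x /\ proj1_sig (tau w) x) n)).
      apply ms_allnat; auto. intro w; rewrite card_None; tauto.
Qed.

Definition rects {St} (a b : nat -> St -> Prop) : (St * St -> Prop) -> Prop :=
  fun R => exists i, forall p, R p <-> (a i (fst p) /\ b i (snd p)).

Lemma generated_mono {T} (G G' : (T -> Prop) -> Prop) A :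
  (forall B, G B -> G' B) -> generated G A -> generated G' A.
Proof. intros H HA F HF HG. apply HA; auto. Qed.

Lemma generated_sigma {T} (G : (T -> Prop) -> Prop) : sigma_algebra (generated G).
Proof.
  split; [|split].
  - intros F HF _. apply HF.
  - intros A HA F HF HG. apply HF. apply HA; auto.
  - intros A HA F HF HG. apply HF. intro n; apply HA; auto.
Qed.

Lemma choice_lem (X Y : Type) (R : X -> Y -> Prop) :
  (forall x, exists y, R x y) -> exists f : X -> Y, forall x, R x (f x).
Proof.
  intros H. exists (fun x => proj1_sig (constructive_indefinite_description _ (H x))).
  intro x; exact (proj2_sig (constructive_indefinite_description _ (H x))).
Qed.

Lemma product_countable {St} (SS : (St -> Prop) -> Prop) (hS : sigma_algebra SS) (R : St * St -> Prop) :
  product_sigma SS SS R -> exists a b : nat -> St -> Prop,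
    (forall i, SS (a i)) /\ (forall i, SS (b i)) /\ generated (rects a b) R.
Proof.
  intros HR.
  set (Q := fun R => exists ab : (nat -> St -> Prop) * (nat -> St -> Prop),
    (forall i, SS (fst ab i)) /\ (forall i, SS (snd ab i)) /\ generated (rects (fst ab) (snd ab)) R).
  assert (HQ : Q R).
  { apply HR.
    - split; [|split].
      + exists ((fun _ _ => True), (fun _ _ => True)); simpl; repeat split.
        1,2: intros; apply hS.
        apply (generated_sigma _).
      + intros A [ab [H1 [H2 H3]]]. exists ab; repeat split; auto.
        apply (generated_sigma _); auto.
      + intros A HA.
        destruct (choice_lem _ _ _ HA) as [f Hf].
        exists ((fun k => fst (f (fst (Cantor.of_nat k))) (snd (Cantor.of_nat k))),
                (fun k => snd (f (fst (Cantor.of_nat k))) (snd (Cantor.of_nat k)))).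
        simpl; repeat split.
        * intro k; apply (Hf _).
        * intro k; apply (Hf _).
        * apply (generated_sigma _). intro n.
          destruct (Hf n) as [_ [_ Hg]]. revert Hg. apply generated_mono.
          intros B [i Hi]. exists (Cantor.to_nat (n, i)). rewrite Cantor.cancel_of_to. simpl; auto.
    - intros B [A [C [HA [HC HB]]]].
      exists ((fun _ => A), (fun _ => C)); simpl; repeat split; auto.
      intros F HF HG. apply HG. exists 0; auto. }
  destruct HQ as [[a b] [H1 [H2 H3]]]; exists a, b; auto.
Qed.

Lemma separating {St} (SS : (St -> Prop) -> Prop) (hS : sigma_algebra SS)
  (hD : product_sigma SS SS (diagonal St)) :
  exists B : nat -> St -> Prop, (forall i, SS (B i)) /\
    forall x y, x <> y -> exists i, ~ (B i x <-> B i y).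
Proof.
  destruct (product_countable SS hS _ hD) as [a [b [Ha [Hb HG]]]].
  exists b; split; auto. intros x y Hxy.
  apply NNPP; intro Hn.
  assert (Hall : forall i, (b i x <-> b i y)).
  { intro i; apply NNPP; intro; apply Hn; eauto. }
  assert (HQ : (fun R : St * St -> Prop => R (x, x) <-> R (x, y)) (diagonal St)).
  { apply HG.
    - split; [|split].
      + simpl; tauto.
      + intros A HA; simpl in *; tauto.
      + intros A HA; simpl in *. split; intros [n Hn']; exists n; apply HA; auto.
    - intros R [i Hi]. simpl. rewrite !Hi; simpl. rewrite (Hall i); tauto. }
  simpl in HQ. unfold diagonal in HQ; simpl in HQ. apply Hxy; apply HQ; auto.
Qed.

Definition Cell {St} (B : nat -> St -> Prop) (c : list (nat * bool)) (x : St) : Prop :=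
  forall p, In p c -> (B (fst p) x <-> snd p = true).

Lemma cell_meas {St} (SS : (St -> Prop) -> Prop) (hS : sigma_algebra SS) B :
  (forall i, SS (B i)) -> forall c, SS (Cell B c).
Proof.
  intros HB c. unfold Cell. apply (ms_alllist SS hS (fun p x => B (fst p) x <-> snd p = true)).
  intros [i [|]]; simpl.
  - apply (ms_ext SS (B i)); auto. intuition.
  - apply (ms_ext SS (fun x => ~ B i x)). apply ms_compl; auto. intuition discriminate.
Qed.

Lemma isolate {St} (B : nat -> St -> Prop)
  (sep : forall x y, x <> y -> exists i, ~ (B i x <-> B i y)) :
  forall W x, exists c, Cell B c x /\ forall y, In y W -> Cell B c y -> y = x.
Proof.
  intros W x. induction W as [|y W [c [H1 H2]]].
  - exists nil; split. intros p []. intros y [].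
  - destruct (classic (y = x)) as [<-|Hyx].
    + exists c; split; auto. intros z [<-|Hz] Hc; auto.
    + destruct (sep x y (fun e => Hyx (eq_sym e))) as [i Hi].
      destruct (classic (B i x)) as [Hb|Hb].
      * exists ((i, true) :: c). split.
        -- intros p [<-|Hp]; simpl. tauto. apply H1; auto.
        -- intros z [Ez|Hz] Hc.
           ++ subst z. exfalso. assert (B i y) by (apply (Hc (i,true)); simpl; auto). tauto.
           ++ apply H2; auto. intros p Hp; apply Hc; simpl; auto.
      * exists ((i, false) :: c). split.
        -- intros p [<-|Hp]; simpl. split; intro; [tauto|discriminate]. apply H1; auto.
        -- intros z [Ez|Hz] Hc.
           ++ subst z. exfalso. assert (~ B i y).
              { intro Hz. apply (Hc (i,false)) in Hz; simpl; auto. discriminate. }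
              tauto.
           ++ apply H2; auto. intros p Hp; apply Hc; simpl; auto.
Qed.

Fixpoint Good {I} (ok : I -> Prop) (pair : I -> I -> Prop) (l : list I) : Prop :=
  match l with
  | nil => True
  | it :: l' => ok it /\ (forall it', In it' l' -> pair it it') /\ Good ok pair l'
  end.

Lemma Good_meas {T I} F (hF : @sigma_algebra T F) (ok : T -> I -> Prop) (pair : T -> I -> I -> Prop) :
  (forall it, F (fun w => ok w it)) -> (forall it it', F (fun w => pair w it it')) ->
  forall l, F (fun w => Good (ok w) (pair w) l).
Proof.
  intros H1 H2 l. induction l as [|a l IH]; simpl.
  - apply ms_true; auto.
  - apply ms_and; auto. apply ms_and; auto.
    apply (ms_alllist F hF (fun it' w => pair w a it')). auto.
Qed.

Lemma F2_in_r {X Y} (R : X -> Y -> Prop) l xs y :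
  Forall2 R l xs -> In y xs -> exists x, In x l /\ R x y.
Proof.
  induction 1; simpl; [tauto|]. intros [<-|Hy]; eauto.
  destruct (IHForall2 Hy) as [z [Hz Hr]]; eauto.
Qed.

Lemma F2_in_l {X Y} (R : X -> Y -> Prop) l xs x :
  Forall2 R l xs -> In x l -> exists y, In y xs /\ R x y.
Proof.
  induction 1; simpl; [tauto|]. intros [<-|Hy]; eauto.
  destruct (IHForall2 Hy) as [z [Hz Hr]]; eauto.
Qed.

Definition okI {St} (B : nat -> St -> Prop) (P : nat -> St -> Prop) (K : nat -> Prop)
  (Bad : nat -> list nat) (A : St -> Prop) (it : list (nat * bool) * nat) : Prop :=
  K (snd it) /\ (exists x, (A x /\ Cell B (fst it) x) /\ P (snd it) x) /\
  forall k', In k' (Bad (snd it)) -> forall x, Cell B (fst it) x -> P k' x -> False.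

Definition pairI {St} (B : nat -> St -> Prop) (P : nat -> St -> Prop)
  (it it' : list (nat * bool) * nat) : Prop :=
  (forall x, (Cell B (fst it) x /\ Cell B (fst it') x) -> P (snd it) x -> False) /\
  (forall x, (Cell B (fst it) x /\ Cell B (fst it') x) -> P (snd it') x -> False).

Definition Tgt {St} (P : nat -> St -> Prop) (K : nat -> Prop) (Bad : nat -> list nat) (x : St) :=
  exists k, K k /\ P k x /\ forall k', In k' (Bad k) -> ~ P k' x.

Lemma good_to_pts {St} B P K Bad (A : St -> Prop) : forall l,
  Good (okI B P K Bad A) (pairI B P) l ->
  exists xs, NoDup xs /\ length xs = length l /\ (forall x, In x xs -> A x /\ Tgt P K Bad x) /\
    Forall2 (fun it x => Cell B (fst it) x /\ P (snd it) x) l xs.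
Proof.
  induction l as [|[c k] l IH]; simpl.
  - intros _. exists nil; simpl; split; [constructor|]; split; [reflexivity|]; split; [tauto|constructor].
  - intros [[HK [[x0 [[Hx Hc] Hp]] Hbad]] [Hpair Hg]]. simpl in *. rename x0 into x.
    destruct (IH Hg) as [xs [H1 [H2 [H3 H4]]]].
    exists (x :: xs); split; [|split; [|split]]; simpl.
    + constructor; auto. intro Hin.
      destruct (F2_in_r _ _ _ _ H4 Hin) as [[c' k'] [Hit [Hc' Hp']]].
      destruct (Hpair _ Hit) as [Q1 Q2]. simpl in *. apply (Q1 x); auto.
    + lia.
    + intros y [Ey|Hy]; [|apply H3; auto]. subst y. split; auto. exists k; split; [|split]; auto.
      intros k' Hk' Hp'. apply (Hbad k' Hk' x); auto.
    + constructor; auto.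
Qed.

Lemma pts_ks {St} (P : nat -> St -> Prop) K Bad (A : St -> Prop) : forall xs,
  (forall x, In x xs -> A x /\ Tgt P K Bad x) ->
  exists ks, Forall2 (fun x k => K k /\ P k x /\ forall k', In k' (Bad k) -> ~ P k' x) xs ks.
Proof.
  induction xs as [|x xs IH]; intros H.
  - exists nil; constructor.
  - destruct (H x (or_introl eq_refl)) as [_ [k Hk]].
    destruct IH as [ks Hks]. intros; apply H; simpl; auto.
    exists (k :: ks); constructor; auto.
Qed.

Lemma cover {St} (P : nat -> St -> Prop) (hfin : forall k, finite_set (P k)) :
  forall Ks, exists W, forall k, In k Ks -> forall x, P k x -> In x W.
Proof.
  induction Ks as [|k Ks [W HW]].
  - exists nil; intros k [].
  - destruct (hfin k) as [L HL]. exists (L ++ W). intros k' [<-|Hk] x Hx; apply in_or_app; eauto.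
Qed.

Lemma build {St} B P K Bad (A : St -> Prop) W
  (sep : forall x y, x <> y -> exists i, ~ (B i x <-> B i y)) : forall xs ks,
  Forall2 (fun x k => K k /\ P k x /\ forall k', In k' (Bad k) -> ~ P k' x) xs ks ->
  NoDup xs -> (forall x, In x xs -> A x) ->
  (forall k, In k ks -> forall y, P k y -> In y W) ->
  (forall k, In k ks -> forall k', In k' (Bad k) -> forall y, P k' y -> In y W) ->
  exists l, length l = length xs /\ Good (okI B P K Bad A) (pairI B P) l /\
    Forall2 (fun x it => (forall y, In y W -> Cell B (fst it) y -> y = x) /\
                         (forall y, P (snd it) y -> In y W)) xs l.
Proof.
  induction 1 as [|x k xs ks [HK [HP HB]] HF IH]; intros Hnd HA HW1 HW2.
  - exists nil; simpl; split; [reflexivity|split; [exact I|constructor]].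
  - inversion Hnd as [|? ? Hnin Hnd']; subst.
    destruct IH as [l [L1 [L2 L3]]]; auto.
    { intros; apply HA; simpl; auto. }
    { intros; eapply HW1; simpl; eauto. }
    { intros; eapply HW2; simpl; eauto. }
    destruct (isolate B sep W x) as [c [Hc1 Hc2]].
    assert (Wk : forall y, P k y -> In y W) by (intros; eapply HW1; simpl; eauto).
    exists ((c, k) :: l). split; [simpl; congruence|]. split; [simpl; split; [|split]|].
    + unfold okI; simpl. split; [auto|split].
      * exists x; split; [split|]; auto. apply HA; simpl; auto.
      * intros k' Hk' y Hy Hp'. assert (y = x) by (apply Hc2; auto; eapply HW2; simpl; eauto).
        subst y. apply (HB k'); auto.
    + intros [c' k'] Hit. destruct (F2_in_r _ _ _ _ L3 Hit) as [x' [Hx' [R1 R2]]].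
      unfold pairI; simpl in *. split.
      * intros y [Hy Hy'] Hp. assert (y = x) by (apply Hc2; auto).
        assert (y = x') by (apply R1; auto). subst. auto.
      * intros y [Hy Hy'] Hp. assert (y = x) by (apply Hc2; auto).
        assert (y = x') by (apply R1; auto). subst. auto.
    + exact L2.
    + constructor; auto.
Qed.

Lemma char {St} (B : nat -> St -> Prop)
  (sep : forall x y, x <> y -> exists i, ~ (B i x <-> B i y))
  (P : nat -> St -> Prop) (hfin : forall k, finite_set (P k)) K Bad A m :
  Ge (fun x => A x /\ Tgt P K Bad x) m <->
  exists l, length l = m /\ Good (okI B P K Bad A) (pairI B P) l.
Proof.
  split.
  - intros [xs [H1 [H2 H3]]].
    destruct (pts_ks P K Bad A xs H3) as [ks Hks].
    destruct (cover P hfin (ks ++ flat_map Bad ks)) as [W HW].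
    destruct (build B P K Bad A W sep xs ks Hks H1) as [l [L1 [L2 _]]].
    + intros; apply H3; auto.
    + intros k Hk; apply HW; apply in_or_app; auto.
    + intros k Hk k' Hk'; apply HW; apply in_or_app; right; apply in_flat_map; eauto.
    + exists l; split; auto; lia.
  - intros [l [L1 L2]]. destruct (good_to_pts B P K Bad A l L2) as [xs [H1 [H2 [H3 _]]]].
    exists xs; split; [auto|split; [lia|auto]].
Qed.

Lemma ev_empty {Omega St} (FF : (Omega -> Prop) -> Prop) (SS : (St -> Prop) -> Prop)
  (pi : Omega -> CS St) (hp : crset FF SS pi) (C : St -> Prop) (hC : SS C) :
  FF (fun w => forall x, C x -> proj1_sig (pi w) x -> False).
Proof.
  apply (ms_ext FF (fun w => (fun M : CS St => card_is (fun x => C x /\ proj1_sig M x) (Some 0)) (pi w))).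
  - apply (hp (fun M : CS St => card_is (fun x => C x /\ proj1_sig M x) (Some 0))). intros F HF HG. apply HG. exists C, (Some 0); split; auto. tauto.
  - intro w; simpl. split.
    + intros [l [H1 [H2 H3]]] x Hx Hp. destruct l; simpl in H2; try discriminate.
      apply (H3 x); auto.
    + intros H. exists nil; split; [constructor|split; [reflexivity|]]. simpl; firstorder.
Qed.

Lemma ev_nonempty {Omega St} (FF : (Omega -> Prop) -> Prop) (SS : (St -> Prop) -> Prop)
  (hF : sigma_algebra FF)
  (pi : Omega -> CS St) (hp : crset FF SS pi) (C : St -> Prop) (hC : SS C) :
  FF (fun w => exists x, C x /\ proj1_sig (pi w) x).
Proof.
  apply (ms_ext FF (fun w => ~ forall x, C x -> proj1_sig (pi w) x -> False)).
  apply ms_compl; auto. apply (ev_empty FF SS); auto.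
  intro w; split. intros H; apply NNPP; intro H'; apply H; intros x Hx Hp; apply H'; eauto.
  intros [x [Hx Hp]] H; eauto.
Qed.

Lemma GeT {Omega St} (FF : (Omega -> Prop) -> Prop) (SS : (St -> Prop) -> Prop)
  (hF : sigma_algebra FF) (hS : sigma_algebra SS) (B : nat -> St -> Prop)
  (hB : forall i, SS (B i)) (sep : forall x y, x <> y -> exists i, ~ (B i x <-> B i y))
  (pi : nat -> Omega -> CS St) (hpi : forall k, finite_crset FF SS (pi k))
  (K : nat -> Prop) (Bad : nat -> list nat) (A : St -> Prop) (hA : SS A) m :
  FF (fun w => Ge (fun x => A x /\ Tgt (fun k x => proj1_sig (pi k w) x) K Bad x) m).
Proof.
  apply (ms_ext FF (fun w => exists l, length l = m /\
     Good (okI B (fun k x => proj1_sig (pi k w) x) K Bad A) (pairI B (fun k x => proj1_sig (pi k w) x)) l)).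
  2:{ intro w. rewrite (char B sep (fun k x => proj1_sig (pi k w) x) (fun k => proj2 (hpi k) w)). tauto. }
  apply Cnt_listlen; auto.
  { apply Cnt_prod. apply Cnt_list; auto. apply Cnt_prod. apply Cnt_nat; auto. apply Cnt_bool; auto.
    apply Cnt_nat; auto. }
  apply Good_meas; auto.
  - intros [c k]. unfold okI; simpl. apply ms_and; auto. apply ms_const; auto.
    apply ms_and; auto.
    + apply (ms_ext FF (fun w => exists x, (A x /\ Cell B c x) /\ proj1_sig (pi k w) x)).
      apply (ev_nonempty FF SS); auto. apply hpi. apply ms_and; auto. apply cell_meas; auto.
      tauto.
    + apply (ms_alllist FF hF (fun k' w => forall x, Cell B c x -> proj1_sig (pi k' w) x -> False)).
      intro k'; apply (ev_empty FF SS); auto. apply hpi. apply cell_meas; auto.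
  - intros [c k] [c' k']. unfold pairI; simpl. apply ms_and; auto.
    + apply (ev_empty FF SS (pi k) (proj1 (hpi k)) (fun x => Cell B c x /\ Cell B c' x)).
      apply ms_and; auto; apply cell_meas; auto.
    + apply (ev_empty FF SS (pi k') (proj1 (hpi k')) (fun x => Cell B c x /\ Cell B c' x)).
      apply ms_and; auto; apply cell_meas; auto.
Qed.

Lemma count_sub {St} (M : CS St) (Q : St -> Prop) : countable (fun x => proj1_sig M x /\ Q x).
Proof.
  destruct (proj2_sig M) as [f Hf]. exists f. intros x y [Hx _] [Hy _]; apply Hf; auto.
Qed.

Definition restrict {St} (M : CS St) (Q : St -> Prop) : CS St :=
  exist _ (fun x => proj1_sig M x /\ Q x) (count_sub M Q).

Lemma Ge_iff {X} (P Q : X -> Prop) m : (forall x, P x <-> Q x) -> (Ge P m <-> Ge Q m).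
Proof.
  intros H; unfold Ge; split; intros [xs [H1 [H2 H3]]]; exists xs; repeat split; auto;
  intros x Hx; apply H; auto.
Qed.

Lemma least (P : nat -> Prop) k : P k -> exists n, P n /\ forall j, j < n -> ~ P j.
Proof.
  revert P. induction k as [k IH] using lt_wf_ind. intros P Hk.
  destruct (classic (exists j, j < k /\ P j)) as [[j [Hj Pj]]|Hn].
  - apply (IH j Hj P Pj).
  - exists k; split; auto. intros j Hj Pj; apply Hn; eauto.
Qed.

Theorem proposition6p2 (Omega S : Type)
  (FF : (Omega -> Prop) -> Prop) (SS : (S -> Prop) -> Prop)
  (hF : sigma_algebra FF) (hS : sigma_algebra SS)
  (hDelta : product_sigma SS SS (diagonal S))
  (tau : Omega -> CS S) (htau : constructive FF SS tau) :
  (exists rho : nat -> Omega -> CS S,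
     (forall n, finite_crset FF SS (rho n)) /\
     (forall w n m, n <> m -> forall x, ~ (proj1_sig (rho n w) x /\ proj1_sig (rho m w) x)) /\
     (forall w x, proj1_sig (tau w) x <-> exists n, proj1_sig (rho n w) x)) /\
  crset FF SS tau.
Proof.
  destruct (separating SS hS hDelta) as [B [hB sep]].
  destruct htau as [pi [hpi hun]].
  split.
  - exists (fun n w => restrict (pi n w) (fun x => forall k, In k (seq 0 n) -> ~ proj1_sig (pi k w) x)).
    split; [|split].
    + intro n. split.
      * apply crset_of_Ge; auto. intros A m hA.
        apply (ms_ext FF (fun w => Ge (fun x => A x /\ Tgt (fun k x => proj1_sig (pi k w) x)
                  (fun k => k = n) (fun k => seq 0 k) x) m)).
        apply GeT with (SS := SS) (B := B); auto.
        intro w; apply Ge_iff. intro x; unfold Tgt; simpl. split.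
        -- intros [Hx [k [-> [H1 H2]]]]; auto.
        -- intros [Hx [H1 H2]]; split; auto. exists n; auto.
      * intro w. destruct (proj2 (hpi n) w) as [L HL]. exists L. intros x [Hx _]; auto.
    + intros w n m Hnm x [[Hn Hn'] [Hm Hm']]. simpl in *.
      destruct (lt_eq_lt_dec n m) as [[Hlt|Heq]|Hgt]; [|lia|].
      * apply (Hm' n); auto. apply in_seq; lia.
      * apply (Hn' m); auto. apply in_seq; lia.
    + intros w x. rewrite hun. split.
      * intros [k Hk]. destruct (least (fun k => proj1_sig (pi k w) x) k Hk) as [n [Hn Hl]].
        exists n; simpl; split; auto. intros j Hj; apply Hl. apply in_seq in Hj; lia.
      * intros [n [Hn _]]; eauto.
  - apply crset_of_Ge; auto. intros A m hA.
    apply (ms_ext FF (fun w => Ge (fun x => A x /\ Tgt (fun k x => proj1_sig (pi k w) x)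
              (fun _ => True) (fun _ => nil) x) m)).
    apply GeT with (SS := SS) (B := B); auto.
    intro w; apply Ge_iff. intro x; unfold Tgt; rewrite hun; simpl. split.
    + intros [Hx [k [_ [H1 _]]]]; eauto.
    + intros [Hx [k Hk]]; split; auto. exists k; repeat split; auto.
Qed.
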